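(* Let $\hat{A}\in\{0,1\}^{n\times n}$ be symmetric with exactly $m$ non-zero entries and no zero row, $d_i=\sum_j\hat{A}_{ij}$. Let $\overline{F}_1,\dots,\overline{F}_\gamma\in\mathbb{R}^{n\times n}$ be symmetric block matrices, where $\overline{F}_t$ is constant on each block $B\times B'$ with $B,B'$ parts of a partition $\mathcal{B}_t$ of $V=\{1,\dots,n\}$. Let $b$ be the greatest lower bound (common refinement) of $\mathcal{B}_1,\dots,\mathcal{B}_\gamma$, i.e. the partition whose parts are the nonempty intersections $P_1\cap\dots\cap P_\gamma$ with $P_t\in\mathcal{B}_t$, and let $|b|$ be its number of parts. Set $c_t=\sum_{a,b'}(\overline{F}_t)_{ab'}\hat{A}_{ab'}$ and $$L(\lambda_1,\dots,\lambda_n,\mu_1,\dots,\mu_\gamma)=\sum_{a,b'}\log\Bigl(1+\exp\bigl(\lambda_a+\textstyle\sum_{t=1}^\gamma\mu_t(\overline{F}_t)_{ab'}\bigr)\Bigr)-\sum_a d_a\lambda_a-\sum_{t=1}^\gamma c_t\mu_t .$$ Let $W$ be the subspace of parameter vectors with $\lambda_a=\lambda_{a'}$ whenever $a,a'$ lie in the same part of $b$ and $d_a=d_{a'}$. Then $\dim W\le\sqrt{2|b|m}+\gamma$, $\inf_W L=\inf L$, and every minimizer of $L$ on $W$ is a global minimizer of $L$.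
   Context: This is the MaxEnt Lagrange dual with one constraint per node degree (feature matrix with ones in row $a$, multiplier $\lambda_a$) and one global constraint per block-approximated feature matrix $\overline{F}_t$ (multiplier $\mu_t$). A partition $\mathcal{B}$ refines $\mathcal{B}'$ if each part of $\mathcal{B}$ is contained in a part of $\mathcal{B}'$; the greatest lower bound of a set of partitions is their coarsest common refinement. *)

(* Defs.v *)
From Stdlib Require Import Reals Lra Lia.
Open Scope R_scope.

Fixpoint rsum (n : nat) (f : nat -> R) : R :=
  match n with
  | O => 0
  | S k => rsum k f + f k
  end.

Fixpoint ncount (n : nat) (P : nat -> bool) : nat :=
  match n with
  | O => O
  | S k => (ncount k P + (if P k then 1 else 0))%nat
  end.

(* A partition of V = {0,...,n-1} is encoded by a block-labelling function
   part : nat -> nat (a ~ a' iff part a = part a').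
   parts : nat -> (nat -> nat) gives the partitions B_1..B_gamma (indices t < gamma). *)

Definition glb_rel (gamma : nat) (parts : nat -> nat -> nat) (a a' : nat) : Prop :=
  forall t, (t < gamma)%nat -> parts t a = parts t a'.

Definition glb_relb (gamma : nat) (parts : nat -> nat -> nat) (a a' : nat) : bool :=
  (fix go (t : nat) : bool :=
     match t with
     | O => true
     | S k => andb (Nat.eqb (parts k a) (parts k a')) (go k)
     end) gamma.

(* number of parts |b| of the glb partition on {0..n-1}: count the
   least elements of each part *)
Definition glb_card (n gamma : nat) (parts : nat -> nat -> nat) : nat :=
  ncount n (fun a =>
    negb ((fix ex (a' : nat) : bool :=
             match a' with
             | O => false
             | S k => orb (glb_relb gamma parts k a) (ex k)
             end) a)).

Definition block_const (n : nat) (part : nat -> nat) (Ft : nat -> nat -> R) : Prop :=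
  forall a b a' b', (a < n)%nat -> (b < n)%nat -> (a' < n)%nat -> (b' < n)%nat ->
    part a = part a' -> part b = part b' -> Ft a b = Ft a' b'.

Definition nnz (n : nat) (A : nat -> nat -> R) : nat :=
  (fix go (k : nat) : nat :=
     match k with
     | O => O
     | S k' => (go k' + ncount n (fun b => if Req_dec_T (A k' b) 0 then false else true))%nat
     end) n.

Definition degree (n : nat) (A : nat -> nat -> R) (a : nat) : R :=
  rsum n (fun j => A a j).

(* Parameter vectors p in R^(n+gamma): lambda_a = p a (a < n),
   mu_t = p (n + t) (t < gamma). *)
Definition dual_L (n gamma : nat) (A : nat -> nat -> R) (F : nat -> nat -> nat -> R)
  (p : nat -> R) : R :=
  rsum n (fun a => rsum n (fun b =>
     ln (1 + exp (p a + rsum gamma (fun t => p (n + t)%nat * F t a b)))))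
  - rsum n (fun a => degree n A a * p a)
  - rsum gamma (fun t =>
      rsum n (fun a => rsum n (fun b => F t a b * A a b)) * p (n + t)%nat).

Definition inW (n gamma : nat) (A : nat -> nat -> R) (parts : nat -> nat -> nat)
  (p : nat -> R) : Prop :=
  forall a a', (a < n)%nat -> (a' < n)%nat ->
    glb_rel gamma parts a a' -> degree n A a = degree n A a' -> p a = p a'.

(* Linear algebra in R^N, vectors = functions nat -> R looked at on indices < N. *)
Definition lin_indep (N k : nat) (v : nat -> nat -> R) : Prop :=
  forall c : nat -> R,
    (forall i, (i < N)%nat -> rsum k (fun j => c j * v j i) = 0) ->
    forall j, (j < k)%nat -> c j = 0.

Definition is_basis_of (N : nat) (S : (nat -> R) -> Prop) (k : nat)
  (v : nat -> nat -> R) : Prop :=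
  (forall j, (j < k)%nat -> S (v j)) /\
  lin_indep N k v /\
  (forall w, S w -> exists c : nat -> R,
     forall i, (i < N)%nat -> w i = rsum k (fun j => c j * v j i)).

Definition has_dim (N : nat) (S : (nat -> R) -> Prop) (k : nat) : Prop :=
  exists v, is_basis_of N S k v.

(* Main.v *)
Require Import Defs.
From Stdlib Require Import Reals Lra Lia List Arith.
Open Scope R_scope.

Definition fl (x : R) : R := ln (1 + exp x).
Definition sg (x : R) : R := exp x / (1 + exp x).

Lemma fl_deriv x : derivable_pt_lim fl x (sg x).
Proof.
  assert (H : derivable_pt_lim (comp ln (fct_cte 1 + exp)%F) x (/ (1 + exp x) * (0 + exp x))).
  { apply derivable_pt_lim_comp.
    - apply derivable_pt_lim_plus; [apply derivable_pt_lim_const | apply derivable_pt_lim_exp].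
    - apply derivable_pt_lim_ln. unfold plus_fct, fct_cte. pose proof (exp_pos x); lra. }
  unfold sg. replace (exp x / (1 + exp x)) with (/ (1 + exp x) * (0 + exp x)) by (unfold Rdiv; ring).
  exact H.
Qed.

Lemma sg_mono x y : x <= y -> sg x <= sg y.
Proof.
  intros H. unfold sg. pose proof (exp_pos x). pose proof (exp_pos y).
  assert (exp x <= exp y). { destruct (Req_dec x y). subst; lra. left; apply exp_increasing; lra. }
  apply (Rmult_le_reg_r ((1 + exp x) * (1 + exp y))). nra.
  field_simplify; try lra.
Qed.

Lemma fl_tangent x y : fl x + sg x * (y - x) <= fl y.
Proof.
  destruct (Rtotal_order x y) as [Hlt|[Heq|Hgt]].
  - destruct (MVT_cor2 fl sg x y Hlt (fun c _ => fl_deriv c)) as [c [Hc Hc2]].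
    pose proof (sg_mono x c ltac:(lra)). nra.
  - subst; lra.
  - destruct (MVT_cor2 fl sg y x Hgt (fun c _ => fl_deriv c)) as [c [Hc Hc2]].
    pose proof (sg_mono c x ltac:(lra)). nra.
Qed.

Lemma rsum_ext n f g : (forall k, (k < n)%nat -> f k = g k) -> rsum n f = rsum n g.
Proof. induction n; intros H; simpl; auto. f_equal; [apply IHn; intros; apply H; lia | apply H; lia]. Qed.

Lemma rsum_plus n f g : rsum n (fun k => f k + g k) = rsum n f + rsum n g.
Proof. induction n; simpl; [lra|]. rewrite IHn; lra. Qed.

Lemma rsum_minus n f g : rsum n (fun k => f k - g k) = rsum n f - rsum n g.
Proof. induction n; simpl; [lra|]. rewrite IHn; lra. Qed.

Lemma rsum_mult_l n c f : rsum n (fun k => c * f k) = c * rsum n f.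
Proof. induction n; simpl; [lra|]. rewrite IHn; lra. Qed.

Lemma rsum_swap n m f : rsum n (fun i => rsum m (fun j => f i j)) = rsum m (fun j => rsum n (fun i => f i j)).
Proof.
  induction n; simpl.
  - induction m; simpl; auto. rewrite <- IHm; lra.
  - rewrite IHn. rewrite <- rsum_plus. reflexivity.
Qed.

Lemma rsum_le n f g : (forall k, (k < n)%nat -> f k <= g k) -> rsum n f <= rsum n g.
Proof. induction n; intros H; simpl; [lra|]. pose proof (H n ltac:(lia)). pose proof (IHn ltac:(intros; apply H; lia)). lra. Qed.

Lemma rsum_zero n f : (forall k, (k < n)%nat -> f k = 0) -> rsum n f = 0.
Proof. induction n; intros H; simpl; [lra|]. rewrite IHn, H; try lra; try lia. intros; apply H; lia. Qed.

Lemma rsum_unique n f k0 : (k0 < n)%nat -> (forall k, (k < n)%nat -> k <> k0 -> f k = 0) -> rsum n f = f k0.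
Proof.
  induction n; intros Hk H; [lia|]. simpl.
  destruct (Nat.eq_dec k0 n).
  - subst. rewrite rsum_zero; [lra|]. intros; apply H; lia.
  - rewrite IHn; [| lia | intros; apply H; lia]. rewrite (H n); [lra|lia|auto].
Qed.

Lemma rsum_add a b f : rsum (a + b) f = rsum a f + rsum b (fun t => f (a + t)%nat).
Proof. induction b; simpl. rewrite Nat.add_0_r; lra. rewrite Nat.add_succ_r; simpl. rewrite IHb; lra. Qed.

Definition cntE (E : nat -> nat -> bool) n a := rsum n (fun x => if E a x then 1 else 0).
Definition smE (E : nat -> nat -> bool) n (p : nat -> R) a := rsum n (fun x => if E a x then p x else 0).
Definition avg (E : nat -> nat -> bool) n (p : nat -> R) (i : nat) : R :=
  if Nat.ltb i n then smE E n p i / cntE E n i else p i.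

Definition equivb (E : nat -> nat -> bool) : Prop :=
  (forall x, E x x = true) /\ (forall x y, E x y = E y x) /\
  (forall x y z, E x y = true -> E y z = true -> E x z = true).

Lemma equivb_row E x y : equivb E -> E x y = true -> forall z, E x z = E y z.
Proof.
  intros [Hr [Hs Ht]] H z. destruct (E x z) eqn:E1; destruct (E y z) eqn:E2; auto.
  - rewrite Hs in H. rewrite (Ht _ _ _ H E1) in E2. discriminate.
  - rewrite (Ht _ _ _ H E2) in E1. discriminate.
Qed.

Lemma cnt_pos E n x : equivb E -> (x < n)%nat -> 1 <= cntE E n x.
Proof.
  intros [Hr _] Hx. unfold cntE.
  assert (H1 : rsum n (fun y => if Nat.eqb y x then 1 else 0) = 1).
  { rewrite (rsum_unique n (fun y => if Nat.eqb y x then 1 else 0) x Hx).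
    rewrite Nat.eqb_refl; auto. intros k _ Hk. apply Nat.eqb_neq in Hk. rewrite Hk. auto. }
  rewrite <- H1. apply rsum_le. intros k _. destruct (Nat.eqb_spec k x). subst. rewrite Hr. lra.
  destruct (E x k); lra.
Qed.

Lemma avg_inv E n p a a' : equivb E -> (a < n)%nat -> (a' < n)%nat -> E a a' = true -> avg E n p a = avg E n p a'.
Proof.
  intros He Ha Ha' H. unfold avg. apply Nat.ltb_lt in Ha. apply Nat.ltb_lt in Ha'. rewrite Ha, Ha'.
  unfold smE, cntE. f_equal; apply rsum_ext; intros k _; rewrite (equivb_row E a a' He H k); auto.
Qed.

Lemma avg_lin E n p c : equivb E ->
  (forall a a', (a < n)%nat -> (a' < n)%nat -> E a a' = true -> c a = c a') ->
  rsum n (fun a => c a * avg E n p a) = rsum n (fun a => c a * p a).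
Proof.
  intros He Hc.
  transitivity (rsum n (fun a => rsum n (fun x => c a / cntE E n a * (if E a x then p x else 0)))).
  { apply rsum_ext. intros a Ha. rewrite rsum_mult_l. unfold avg. apply Nat.ltb_lt in Ha. rewrite Ha.
    unfold smE. unfold Rdiv. ring. }
  rewrite rsum_swap. apply rsum_ext. intros x Hx.
  transitivity (rsum n (fun a => (c x / cntE E n x * p x) * (if E x a then 1 else 0))).
  { apply rsum_ext. intros a Ha. destruct He as [Hr [Hs Ht]].
    destruct (E a x) eqn:Eax.
    - rewrite Hs in Eax. rewrite Eax. rewrite <- (Hc x a Hx Ha Eax).
      assert (cntE E n a = cntE E n x) as ->.
      { unfold cntE. apply rsum_ext. intros k _. rewrite (equivb_row E x a (conj Hr (conj Hs Ht)) Eax k). auto. }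
      ring.
    - rewrite Hs in Eax. rewrite Eax. ring. }
  rewrite rsum_mult_l. fold (cntE E n x). pose proof (cnt_pos E n x He Hx). field. lra.
Qed.

Definition sgam n gamma (F : nat -> nat -> nat -> R) (p : nat -> R) a b :=
  rsum gamma (fun t => p (n + t)%nat * F t a b).

Lemma avg_L n gamma A F E p : equivb E ->
  (forall t a a' b, (t < gamma)%nat -> (a < n)%nat -> (a' < n)%nat -> (b < n)%nat ->
     E a a' = true -> F t a b = F t a' b) ->
  (forall a a', (a < n)%nat -> (a' < n)%nat -> E a a' = true -> degree n A a = degree n A a') ->
  dual_L n gamma A F (avg E n p) <= dual_L n gamma A F p.
Proof.
  intros He HF Hd. set (q := avg E n p).
  assert (Hqn : forall t, q (n + t)%nat = p (n + t)%nat).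
  { intros t. unfold q, avg. replace (Nat.ltb (n + t) n) with false; auto.
    symmetry; apply Nat.ltb_ge; lia. }
  unfold dual_L.
  assert (H3 : rsum gamma (fun t => rsum n (fun a => rsum n (fun b => F t a b * A a b)) * q (n + t)%nat)
             = rsum gamma (fun t => rsum n (fun a => rsum n (fun b => F t a b * A a b)) * p (n + t)%nat)).
  { apply rsum_ext; intros; rewrite Hqn; auto. }
  assert (H2 : rsum n (fun a => degree n A a * q a) = rsum n (fun a => degree n A a * p a)).
  { apply avg_lin; auto. }
  set (c := fun a => rsum n (fun b => sg (q a + sgam n gamma F p a b))).
  assert (Hc0 : rsum n (fun a => c a * q a) = rsum n (fun a => c a * p a)).
  { apply avg_lin; auto. intros a a' Ha Ha' Haa. unfold c.
    unfold q; rewrite (avg_inv E n p a a' He Ha Ha' Haa). apply rsum_ext. intros b Hb. unfold sgam.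
    f_equal. f_equal. apply rsum_ext. intros t Ht. rewrite (HF t a a' b); auto. }
  assert (H1 : rsum n (fun a => rsum n (fun b => ln (1 + exp (q a + rsum gamma (fun t => q (n + t)%nat * F t a b)))))
     + (rsum n (fun a => c a * p a) - rsum n (fun a => c a * q a))
     <= rsum n (fun a => rsum n (fun b => ln (1 + exp (p a + rsum gamma (fun t => p (n + t)%nat * F t a b)))))).
  { rewrite <- rsum_minus, <- rsum_plus. apply rsum_le. intros a Ha.
    replace (c a * p a - c a * q a) with (rsum n (fun b => sg (q a + sgam n gamma F p a b) * (p a - q a))).
    2:{ unfold c. rewrite <- Rmult_minus_distr_l. rewrite Rmult_comm, <- rsum_mult_l.
        apply rsum_ext; intros; ring. }
    rewrite <- rsum_plus. apply rsum_le. intros b Hb.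
    pose proof (fl_tangent (q a + sgam n gamma F p a b) (p a + sgam n gamma F p a b)) as T.
    unfold fl, sgam in T. unfold sgam.
    replace (rsum gamma (fun t => q (n + t)%nat * F t a b)) with (rsum gamma (fun t => p (n + t)%nat * F t a b)).
    2:{ apply rsum_ext; intros; rewrite Hqn; auto. }
    replace (p a + rsum gamma (fun t => p (n + t)%nat * F t a b) - (q a + rsum gamma (fun t => p (n + t)%nat * F t a b))) with (p a - q a) in T by ring.
    lra. }
  rewrite H3, H2. lra.
Qed.
Open Scope nat_scope.

Fixpoint nsum (n : nat) (f : nat -> nat) : nat :=
  match n with O => O | S k => nsum k f + f k end.

Lemma ncount_nsum n P : ncount n P = nsum n (fun k => if P k then 1 else 0).
Proof. induction n; simpl; auto. Qed.

Lemma nsum_ext n f g : (forall k, k < n -> f k = g k) -> nsum n f = nsum n g.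
Proof. induction n; intros H; simpl; auto. f_equal; [apply IHn; intros; apply H; lia | apply H; lia]. Qed.

Lemma ncount_ext n P Q : (forall k, k < n -> P k = Q k) -> ncount n P = ncount n Q.
Proof. intros H; rewrite !ncount_nsum; apply nsum_ext; intros k Hk; rewrite H; auto. Qed.

Lemma nsum_plus n f g : nsum n (fun k => f k + g k) = nsum n f + nsum n g.
Proof. induction n; simpl; auto. rewrite IHn; lia. Qed.

Lemma nsum_mult_l n c f : nsum n (fun k => c * f k) = c * nsum n f.
Proof. induction n; simpl; [lia|]. rewrite IHn; lia. Qed.

Lemma nsum_swap n m f : nsum n (fun i => nsum m (fun j => f i j)) = nsum m (fun j => nsum n (fun i => f i j)).
Proof.
  induction n; simpl.
  - induction m; simpl; auto. rewrite <- IHm; lia.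
  - rewrite IHn. rewrite <- nsum_plus. reflexivity.
Qed.

Lemma nsum_le n f g : (forall k, k < n -> f k <= g k) -> nsum n f <= nsum n g.
Proof. induction n; intros H; simpl; [lia|]. pose proof (H n ltac:(lia)). pose proof (IHn ltac:(intros; apply H; lia)). lia. Qed.

Lemma nsum_zero n f : (forall k, k < n -> f k = 0) -> nsum n f = 0.
Proof. induction n; intros H; simpl; [lia|]. rewrite IHn, H; try lia. intros; apply H; lia. Qed.

Lemma nsum_unique n f k0 : k0 < n -> (forall k, k < n -> k <> k0 -> f k = 0) -> nsum n f = f k0.
Proof.
  induction n; intros Hk H; [lia|]. simpl.
  destruct (Nat.eq_dec k0 n).
  - subst. rewrite nsum_zero; [lia|]. intros; apply H; lia.
  - rewrite IHn; [| lia | intros; apply H; lia]. rewrite (H n); [lia|lia|auto].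
Qed.

Lemma ncount_le1 n P : (forall x y, x < n -> y < n -> P x = true -> P y = true -> x = y) -> ncount n P <= 1.
Proof.
  induction n; intros H; simpl; [lia|].
  destruct (P n) eqn:Pn.
  - rewrite ncount_nsum, nsum_zero; [lia|]. intros k Hk. destruct (P k) eqn:Pk; auto.
    specialize (H k n ltac:(lia) ltac:(lia) Pk Pn). lia.
  - pose proof (IHn ltac:(intros; apply H; auto; lia)). lia.
Qed.

Lemma ncount_leN n P : ncount n P <= n.
Proof. induction n; simpl; auto. destruct (P n); lia. Qed.

Lemma sq_le_le x y : x * x <= y * y -> x <= y.
Proof. intros H. destruct (le_lt_dec x y); auto. assert (y * y < x * x) by nia. lia. Qed.

Lemma cs_nat n u v : nsum n (fun k => u k * v k) * nsum n (fun k => u k * v k)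
   <= nsum n (fun k => u k * u k) * nsum n (fun k => v k * v k).
Proof.
  induction n; simpl; [lia|].
  set (S := nsum n (fun k => u k * v k)) in *.
  set (A := nsum n (fun k => u k * u k)) in *.
  set (B := nsum n (fun k => v k * v k)) in *.
  set (x := u n) in *. set (y := v n) in *.
  assert (H : 2 * (S * (x * y)) <= A * (y * y) + B * (x * x)).
  { apply sq_le_le.
    assert (H1 : (S * (x * y)) * (S * (x * y)) <= (A * (y * y)) * (B * (x * x))).
    { replace ((S * (x * y)) * (S * (x * y))) with ((S * S) * ((x*y) * (x*y))) by ring.
      replace ((A * (y * y)) * (B * (x * x))) with ((A * B) * ((x*y)*(x*y))) by ring.
      apply Nat.mul_le_mono_r. auto. }
    set (X := A * (y * y)) in *. set (Y := B * (x * x)) in *. set (Z := S * (x * y)) in *.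
    assert (H2 : 4 * (X * Y) <= (X + Y) * (X + Y)).
    { destruct (le_lt_dec X Y) as [h|h].
      - destruct (Nat.le_exists_sub X Y h) as [d [-> _]]. nia.
      - destruct (Nat.le_exists_sub Y X ltac:(lia)) as [d [-> _]]. nia. }
    replace (2 * Z * (2 * Z)) with (4 * (Z * Z)) by ring. lia. }
  replace ((S + x * y) * (S + x * y)) with (S*S + 2 * (S * (x * y)) + (x*x)*(y*y)) by ring.
  replace ((A + x * x) * (B + y * y)) with (A*B + (A * (y * y) + B * (x * x)) + (x*x)*(y*y)) by ring.
  lia.
Qed.
Close Scope nat_scope.
Open Scope nat_scope.

Definition exb (R : nat -> nat -> bool) (a : nat) : nat -> bool :=
  fix ex (a' : nat) : bool := match a' with O => false | S k => orb (R k a) (ex k) end.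
Definition leader R a := negb (exb R a a).

Lemma glb_card_eq n gamma parts : glb_card n gamma parts = ncount n (leader (glb_relb gamma parts)).
Proof. reflexivity. Qed.

Lemma exb_spec R a a' : exb R a a' = true <-> exists k, k < a' /\ R k a = true.
Proof.
  induction a'; unfold exb in *; simpl; fold (exb R a) in *. split; [discriminate | intros [k [Hk _]]; lia].
  rewrite Bool.orb_true_iff, IHa'. split.
  - intros [H|[k [Hk H]]]; [exists a'|exists k]; split; auto; lia.
  - intros [k [Hk H]]. destruct (Nat.eq_dec k a'); [subst; auto|right; exists k; split; auto; lia].
Qed.

Lemma leader_spec R a : leader R a = true <-> forall k, k < a -> R k a = false.
Proof.
  unfold leader. rewrite Bool.negb_true_iff. split.
  - intros H k Hk. destruct (R k a) eqn:E; auto. assert (exb R a a = true) by (apply exb_spec; eauto). congruence.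
  - intros H. destruct (exb R a a) eqn:E; auto. apply exb_spec in E. destruct E as [k [Hk Hk']]. rewrite H in Hk'; auto.
Qed.

Lemma min_ex (P : nat -> bool) N : (forall k, k <= N -> P k = false) \/
  (exists a, a <= N /\ P a = true /\ forall k, k < a -> P k = false).
Proof.
  induction N.
  - destruct (P 0) eqn:E. right; exists 0; repeat split; auto; intros; lia.
    left; intros k Hk; replace k with 0 by lia; auto.
  - destruct IHN as [H|H]; [|right; destruct H as [a [? ?]]; exists a; split; auto; lia].
    destruct (P (S N)) eqn:E.
    + right; exists (S N); repeat split; auto; intros; apply H; lia.
    + left; intros k Hk. destruct (Nat.eq_dec k (S N)); [subst; auto| apply H; lia].
Qed.

Lemma leader_exists R r : equivb R -> exists a, a <= r /\ leader R a = true /\ R a r = true.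
Proof.
  intros He. pose proof He as [Hr [Hs Ht]].
  destruct (min_ex (fun a => R a r) r) as [H|[a [Ha [Har Hmin]]]].
  - specialize (H r (le_n _)). simpl in H. rewrite Hr in H; discriminate.
  - exists a. repeat split; auto. apply leader_spec. intros k Hk.
    destruct (R k a) eqn:E; auto. exfalso. pose proof (Ht _ _ _ E Har) as H1. specialize (Hmin k Hk). simpl in Hmin. congruence.
Qed.

Lemma leader_unique R a b : equivb R -> leader R a = true -> leader R b = true -> R a b = true -> a = b.
Proof.
  intros [Hr [Hs Ht]] Ha Hb Hab. rewrite leader_spec in Ha, Hb.
  destruct (lt_eq_lt_dec a b) as [[h|h]|h]; auto.
  - rewrite Hb in Hab; auto. discriminate.
  - rewrite Hs in Hab. rewrite Ha in Hab; auto. discriminate.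
Qed.

Lemma leader_count R n r : equivb R -> r < n -> ncount n (fun a => andb (leader R a) (R a r)) = 1.
Proof.
  intros He Hr. destruct (leader_exists R r He) as [a0 [Ha0 [L0 R0]]].
  rewrite ncount_nsum. rewrite (nsum_unique n _ a0); [| lia |].
  - rewrite L0, R0; auto.
  - intros k Hk Hne. destruct (leader R k) eqn:Lk; destruct (R k r) eqn:Rk; auto.
    exfalso. apply Hne. apply (leader_unique R); auto.
    destruct He as [_ [Hs Ht]]. apply (Ht _ r _); auto. rewrite Hs; auto.
Qed.
Close Scope nat_scope.
Open Scope nat_scope.

Lemma distinct_sum n P d B :
  (forall r, r < n -> P r = true -> 1 <= d r /\ d r <= B) ->
  (forall r r', r < n -> r' < n -> P r = true -> P r' = true -> d r = d r' -> r = r') ->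
  ncount n P * (ncount n P + 1) <= 2 * nsum n (fun r => if P r then d r else 0).
Proof.
  intros Hd Hinj.
  assert (Hm : forall M, ncount n (fun r => andb (P r) (Nat.leb (d r) M)) <= M /\
     ncount n (fun r => andb (P r) (Nat.leb (d r) M)) * (ncount n (fun r => andb (P r) (Nat.leb (d r) M)) + 1)
     <= 2 * nsum n (fun r => if andb (P r) (Nat.leb (d r) M) then d r else 0)).
  { induction M.
    - rewrite ncount_nsum, nsum_zero; [lia|]. intros k Hk. destruct (P k) eqn:Pk; simpl; auto.
      destruct (Hd k Hk Pk). destruct (Nat.leb_spec (d k) 0); [lia|auto].
    - set (e := ncount n (fun r => andb (P r) (Nat.eqb (d r) (S M)))).
      assert (He : e <= 1).
      { apply ncount_le1. intros x y Hx Hy Px Py.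
        apply Bool.andb_true_iff in Px, Py. destruct Px as [Px Dx], Py as [Py Dy].
        apply Nat.eqb_eq in Dx, Dy. apply Hinj; auto; lia. }
      assert (Hc : ncount n (fun r => andb (P r) (Nat.leb (d r) (S M))) =
                   ncount n (fun r => andb (P r) (Nat.leb (d r) M)) + e).
      { unfold e. rewrite !ncount_nsum, <- nsum_plus. apply nsum_ext. intros k _.
        destruct (P k); simpl; auto.
        destruct (Nat.leb_spec (d k) (S M)); destruct (Nat.leb_spec (d k) M); destruct (Nat.eqb_spec (d k) (S M)); lia. }
      assert (Hf : nsum n (fun r => if andb (P r) (Nat.leb (d r) (S M)) then d r else 0) =
                   nsum n (fun r => if andb (P r) (Nat.leb (d r) M) then d r else 0) + S M * e).
      { unfold e. rewrite !ncount_nsum, <- nsum_mult_l, <- nsum_plus. apply nsum_ext. intros k _.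
        destruct (P k); simpl; auto.
        destruct (Nat.leb_spec (d k) (S M)); destruct (Nat.leb_spec (d k) M); destruct (Nat.eqb_spec (d k) (S M)); lia. }
      rewrite Hc, Hf. destruct IHM as [I1 I2].
      set (c := ncount n (fun r => andb (P r) (Nat.leb (d r) M))) in *.
      set (f := nsum n (fun r => if andb (P r) (Nat.leb (d r) M) then d r else 0)) in *.
      assert (e = 0 \/ e = 1) as [-> | ->] by lia; split; nia. }
  destruct (Hm B) as [_ H].
  replace (ncount n P) with (ncount n (fun r => andb (P r) (Nat.leb (d r) B))).
  replace (nsum n (fun r => if P r then d r else 0)) with (nsum n (fun r => if andb (P r) (Nat.leb (d r) B) then d r else 0)); auto.
  - apply nsum_ext. intros k Hk. destruct (P k) eqn:Pk; simpl; auto. destruct (Hd k Hk Pk).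
    destruct (Nat.leb_spec (d k) B); [auto|lia].
  - apply ncount_ext. intros k Hk. destruct (P k) eqn:Pk; simpl; auto. destruct (Hd k Hk Pk).
    apply Nat.leb_le; auto.
Qed.
Close Scope nat_scope.
Open Scope nat_scope.

Definition dn n (A : nat -> nat -> R) a := ncount n (fun b => if Req_dec_T (A a b) 0 then false else true).



Lemma nnz_eq n A : nnz n A = nsum n (dn n A).
Proof.
  unfold nnz, dn.
  assert (forall k, (fix go (k : nat) : nat :=
     match k with
     | O => O
     | S k' => (go k' + ncount n (fun b => if Req_dec_T (A k' b) 0%R then false else true))%nat
     end) k = nsum k (fun a => ncount n (fun b => if Req_dec_T (A a b) 0%R then false else true))).
  { induction k; simpl; auto. }
  apply H.
Qed.

Lemma degree_eq n A a : (forall b, b < n -> A a b = 0%R \/ A a b = 1%R) ->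
  degree n A a = INR (dn n A a).
Proof.
  intros H. unfold degree, dn.
  assert (forall k, k <= n -> rsum k (fun j => A a j) = INR (ncount k (fun b => if Req_dec_T (A a b) 0 then false else true))).
  { induction k; intros Hk; simpl; auto. rewrite plus_INR, IHk by lia.
    destruct (H k ltac:(lia)) as [E|E]; rewrite E; destruct (Req_dec_T _ 0); simpl; try lra. }
  apply H0; lia.
Qed.

Lemma glb_relb_spec gamma parts a a' : glb_relb gamma parts a a' = true <-> glb_rel gamma parts a a'.
Proof.
  unfold glb_relb, glb_rel. induction gamma; simpl.
  - split; auto; intros; lia.
  - rewrite Bool.andb_true_iff, IHgamma, Nat.eqb_eq. split.
    + intros [H1 H2] t Ht. destruct (Nat.eq_dec t gamma); [subst; auto|apply H2; lia].
    + intros H; split; [apply H; lia| intros; apply H; lia].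
Qed.

Lemma glb_equiv gamma parts : equivb (glb_relb gamma parts).
Proof.
  repeat split.
  - intros x. apply glb_relb_spec. intros t _; auto.
  - intros x y. destruct (glb_relb gamma parts x y) eqn:E1; destruct (glb_relb gamma parts y x) eqn:E2; auto.
    + rewrite glb_relb_spec in E1. assert (glb_relb gamma parts y x = true) by (apply glb_relb_spec; intros t Ht; symmetry; auto). congruence.
    + rewrite glb_relb_spec in E2. assert (glb_relb gamma parts x y = true) by (apply glb_relb_spec; intros t Ht; symmetry; auto). congruence.
  - intros x y z H1 H2. rewrite glb_relb_spec in *. intros t Ht. rewrite (H1 t Ht); auto.
Qed.

Definition Eb n A gamma parts a a' := andb (glb_relb gamma parts a a') (Nat.eqb (dn n A a) (dn n A a')).

Lemma Eb_equiv n A gamma parts : equivb (Eb n A gamma parts).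
Proof.
  destruct (glb_equiv gamma parts) as [Hr [Hs Ht]]. unfold Eb. repeat split.
  - intros x. rewrite Hr, Nat.eqb_refl; auto.
  - intros x y. rewrite Hs, Nat.eqb_sym; auto.
  - intros x y z H1 H2. apply Bool.andb_true_iff in H1, H2. destruct H1 as [H1 H1'], H2 as [H2 H2'].
    apply Nat.eqb_eq in H1', H2'. rewrite (Ht _ _ _ H1 H2). apply Nat.eqb_eq; lia.
Qed.
Close Scope nat_scope.
Open Scope nat_scope.

Lemma lead_sum R n r x : equivb R -> r < n ->
  nsum n (fun a => if andb (leader R a) (R a r) then x else 0) = x.
Proof.
  intros He Hr. pose proof (leader_count R n r He Hr) as H. rewrite ncount_nsum in H.
  transitivity (x * 1); [|lia]. rewrite <- H. rewrite <- nsum_mult_l. apply nsum_ext. intros k _.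
  destruct (andb _ _); lia.
Qed.

Lemma K_bound n A gamma parts :
  (forall r, r < n -> 1 <= dn n A r) ->
  ncount n (leader (Eb n A gamma parts)) * ncount n (leader (Eb n A gamma parts))
  <= ncount n (leader (glb_relb gamma parts)) * (2 * nsum n (dn n A)).
Proof.
  intros Hd1.
  set (G := glb_relb gamma parts). set (Ev := Eb n A gamma parts).
  set (L := leader G). set (LE := leader Ev).
  set (Db := fun a => ncount n (fun r => andb (LE r) (G a r))).
  pose proof (glb_equiv gamma parts) as HG. fold G in HG.
  pose proof (Eb_equiv n A gamma parts) as HE. fold Ev in HE.
  assert (HK : ncount n LE = nsum n (fun a => if L a then Db a else 0)).
  { transitivity (nsum n (fun a => nsum n (fun r => if andb (L a) (andb (LE r) (G a r)) then 1 else 0))).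
    2:{ apply nsum_ext. intros a _. unfold Db. destruct (L a); simpl.
        - rewrite ncount_nsum; auto.
        - apply nsum_zero; auto. }
    rewrite nsum_swap, ncount_nsum. apply nsum_ext. intros r Hr.
    destruct (LE r).
    - simpl. symmetry. etransitivity; [|apply (lead_sum G n r 1 HG Hr)]. apply nsum_ext. intros a _. fold L. destruct (L a), (G a r); auto.
    - symmetry; apply nsum_zero. intros a _. destruct (L a); auto. }
  assert (Hm : nsum n (dn n A) = nsum n (fun a => if L a then nsum n (fun a' => if G a a' then dn n A a' else 0) else 0)).
  { transitivity (nsum n (fun a => nsum n (fun a' => if andb (L a) (G a a') then dn n A a' else 0))).
    2:{ apply nsum_ext. intros a _. destruct (L a); simpl; auto. rewrite nsum_zero; auto. }
    rewrite nsum_swap. apply nsum_ext. intros r Hr. symmetry. apply (lead_sum G n r _ HG Hr). }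
  assert (HD : forall a, Db a * (Db a + 1) <= 2 * nsum n (fun a' => if G a a' then dn n A a' else 0)).
  { intros a. eapply Nat.le_trans. apply (distinct_sum n (fun r => andb (LE r) (G a r)) (dn n A) n).
    - intros r Hr _. split; auto. apply ncount_leN.
    - intros r r' Hr Hr' P1 P2 Hdd. apply Bool.andb_true_iff in P1, P2.
      destruct P1 as [L1 G1], P2 as [L2 G2]. apply (leader_unique Ev); auto.
      unfold Ev, Eb. fold G. apply Bool.andb_true_iff. split; [|apply Nat.eqb_eq; auto].
      destruct HG as [_ [Hs Ht]]. apply (Ht _ a _); auto. rewrite Hs; auto.
    - apply Nat.mul_le_mono_l. apply nsum_le. intros k _. destruct (LE k), (G a k); simpl; lia. }
  pose proof (cs_nat n (fun a => if L a then 1 else 0) (fun a => if L a then Db a else 0)) as CS. cbv beta in CS.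
  rewrite (nsum_ext n (fun k => (if L k then 1 else 0) * (if L k then Db k else 0)) (fun a => if L a then Db a else 0)) in CS
    by (intros k _; destruct (L k); lia).
  rewrite (nsum_ext n (fun k => (if L k then 1 else 0) * (if L k then 1 else 0)) (fun a => if L a then 1 else 0)) in CS
    by (intros k _; destruct (L k); lia).
  rewrite <- ncount_nsum in CS. fold L LE. rewrite HK. eapply Nat.le_trans; [exact CS|].
  apply Nat.mul_le_mono_l. rewrite Hm, <- nsum_mult_l. apply nsum_le. intros k _.
  destruct (L k); [|lia]. specialize (HD k). nia.
Qed.
Close Scope nat_scope.

Lemma len_filter (P : nat -> bool) n : length (filter P (seq 0 n)) = ncount n P.
Proof.
  induction n; [reflexivity|]. rewrite seq_S, filter_app, length_app, IHn. simpl.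
  simpl ncount. destruct (P n); simpl; lia.
Qed.

Lemma basis_gen n gamma (E : nat -> nat -> bool) (S : (nat -> R) -> Prop) :
  equivb E ->
  (forall w, S w <-> forall a a', (a < n)%nat -> (a' < n)%nat -> E a a' = true -> w a = w a') ->
  has_dim (n + gamma) S (ncount n (leader E) + gamma).
Proof.
  intros He HS. pose proof He as [Hr [Hs Ht]].
  set (lst := filter (leader E) (seq 0 n)).
  set (K := length lst).
  assert (HK : K = ncount n (leader E)) by apply len_filter.
  rewrite <- HK.
  set (rj := fun j => nth j lst 0%nat).
  assert (R1 : forall j, (j < K)%nat -> (rj j < n)%nat /\ leader E (rj j) = true).
  { intros j Hj. assert (Hin : In (rj j) lst) by (apply nth_In; auto).
    unfold lst in Hin. apply filter_In in Hin. destruct Hin as [H1 H2]. apply in_seq in H1. split; auto; lia. }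
  assert (R2 : forall j j', (j < K)%nat -> (j' < K)%nat -> rj j = rj j' -> j = j').
  { intros j j' Hj Hj' H. assert (ND : NoDup lst) by (apply NoDup_filter, seq_NoDup).
    rewrite (NoDup_nth lst 0%nat) in ND. apply ND; auto. }
  assert (R3 : forall i, (i < n)%nat -> exists j, (j < K)%nat /\ E (rj j) i = true).
  { intros i Hi. destruct (leader_exists E i He) as [a [Ha [La Ea]]].
    assert (Hin : In a lst) by (apply filter_In; split; auto; apply in_seq; lia).
    destruct (In_nth lst a 0%nat Hin) as [j [Hj Hja]]. exists j. split; auto. unfold rj; rewrite Hja; auto. }
  assert (R4 : forall i j j', (j < K)%nat -> (j' < K)%nat -> E (rj j) i = true -> E (rj j') i = true -> j = j').
  { intros i j j' Hj Hj' E1 E2. apply R2; auto. destruct (R1 j Hj), (R1 j' Hj').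
    apply (leader_unique E); auto. apply (Ht _ i _); auto. rewrite Hs; auto. }
  set (v := fun j i => if Nat.ltb j K then (if Nat.ltb i n then (if E (rj j) i then 1 else 0) else 0)
                       else (if Nat.eqb i (n + (j - K)) then 1 else 0)).
  assert (S1 : forall c i j0, (i < n)%nat -> (j0 < K)%nat -> E (rj j0) i = true ->
     rsum (K + gamma) (fun j => c j * v j i) = c j0).
  { intros c i j0 Hi Hj0 Ej0. rewrite rsum_add.
    rewrite (rsum_zero gamma).
    2:{ intros t Ht'. unfold v. replace (Nat.ltb (K + t) K) with false by (symmetry; apply Nat.ltb_ge; lia).
        replace (Nat.eqb i (n + (K + t - K))) with false by (symmetry; apply Nat.eqb_neq; lia). ring. }
    rewrite (rsum_unique K _ j0 Hj0).
    - unfold v. replace (Nat.ltb j0 K) with true by (symmetry; apply Nat.ltb_lt; lia).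
      replace (Nat.ltb i n) with true by (symmetry; apply Nat.ltb_lt; lia). rewrite Ej0. ring.
    - intros j Hj Hne. unfold v. replace (Nat.ltb j K) with true by (symmetry; apply Nat.ltb_lt; lia).
      replace (Nat.ltb i n) with true by (symmetry; apply Nat.ltb_lt; lia).
      destruct (E (rj j) i) eqn:Ej; [|ring]. exfalso; apply Hne; apply (R4 i); auto. }
  assert (S2 : forall c i, (n <= i)%nat -> (i < n + gamma)%nat ->
     rsum (K + gamma) (fun j => c j * v j i) = c (K + (i - n))%nat).
  { intros c i Hi1 Hi2. rewrite rsum_add.
    rewrite (rsum_zero K).
    2:{ intros j Hj. unfold v. replace (Nat.ltb j K) with true by (symmetry; apply Nat.ltb_lt; lia).
        replace (Nat.ltb i n) with false by (symmetry; apply Nat.ltb_ge; lia). ring. }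
    rewrite (rsum_unique gamma _ (i - n)%nat ltac:(lia)).
    - unfold v. replace (Nat.ltb (K + (i - n)) K) with false by (symmetry; apply Nat.ltb_ge; lia).
      replace (Nat.eqb i (n + (K + (i - n) - K))) with true by (symmetry; apply Nat.eqb_eq; lia). ring.
    - intros t Ht' Hne. unfold v. replace (Nat.ltb (K + t) K) with false by (symmetry; apply Nat.ltb_ge; lia).
      replace (Nat.eqb i (n + (K + t - K))) with false by (symmetry; apply Nat.eqb_neq; lia). ring. }
  exists v. split; [|split].
  - intros j Hj. apply HS. intros a a' Ha Ha' Eaa. unfold v.
    replace (Nat.ltb a n) with true by (symmetry; apply Nat.ltb_lt; lia).
    replace (Nat.ltb a' n) with true by (symmetry; apply Nat.ltb_lt; lia).
    destruct (Nat.ltb j K).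
    + rewrite Hs, (Hs (rj j) a'), (equivb_row E a a' He Eaa); auto.
    + replace (Nat.eqb a (n + (j - K))) with false by (symmetry; apply Nat.eqb_neq; lia).
      replace (Nat.eqb a' (n + (j - K))) with false by (symmetry; apply Nat.eqb_neq; lia). auto.
  - intros c Hc j Hj. destruct (Nat.ltb_spec j K).
    + destruct (R1 j H). specialize (Hc (rj j) ltac:(lia)). rewrite (S1 c (rj j) j) in Hc; auto.
    + specialize (Hc (n + (j - K))%nat ltac:(lia)). rewrite (S2 c) in Hc; try lia.
      replace (K + (n + (j - K) - n))%nat with j in Hc by lia. auto.
  - intros w Hw. exists (fun j => if Nat.ltb j K then w (rj j) else w (n + (j - K))%nat).
    intros i Hi. destruct (Nat.ltb_spec i n).
    + destruct (R3 i H) as [j0 [Hj0 Ej0]]. rewrite (S1 _ i j0); auto.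
      replace (Nat.ltb j0 K) with true by (symmetry; apply Nat.ltb_lt; lia).
      destruct (R1 j0 Hj0). symmetry. apply (proj1 (HS w) Hw); auto.
    + rewrite S2; try lia. replace (Nat.ltb (K + (i - n)) K) with false by (symmetry; apply Nat.ltb_ge; lia).
      f_equal. lia.
Qed.

Lemma ncount_pos n (P : nat -> bool) b : (b < n)%nat -> P b = true -> (1 <= ncount n P)%nat.
Proof.
  induction n; intros Hb Pb; [lia|]. simpl. destruct (Nat.eq_dec b n).
  - subst. rewrite Pb. lia.
  - pose proof (IHn ltac:(lia) Pb). lia.
Qed.

Theorem mainTheorem3
  (n m gamma : nat) (A : nat -> nat -> R)
  (F : nat -> nat -> nat -> R) (parts : nat -> nat -> nat)
  (hA01 : forall a b, (a < n)%nat -> (b < n)%nat -> A a b = 0 \/ A a b = 1)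
  (hAsym : forall a b, (a < n)%nat -> (b < n)%nat -> A a b = A b a)
  (hm : m = nnz n A)
  (hrow : forall a, (a < n)%nat -> exists b, (b < n)%nat /\ A a b <> 0)
  (hFsym : forall t a b, (t < gamma)%nat -> (a < n)%nat -> (b < n)%nat ->
             F t a b = F t b a)
  (hFblock : forall t, (t < gamma)%nat -> block_const n (parts t) (F t)) :
  (exists k, has_dim (n + gamma) (inW n gamma A parts) k /\
     INR k <= sqrt (2 * INR (glb_card n gamma parts) * INR m) + INR gamma) /\
  (forall r : R,
     (forall p, inW n gamma A parts p -> r <= dual_L n gamma A F p) <->
     (forall p, r <= dual_L n gamma A F p)) /\
  (forall p, inW n gamma A parts p ->
     (forall q, inW n gamma A parts q -> dual_L n gamma A F p <= dual_L n gamma A F q) ->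
     forall q, dual_L n gamma A F p <= dual_L n gamma A F q).
Proof.
  set (Ev := Eb n A gamma parts).
  pose proof (Eb_equiv n A gamma parts) as HE. fold Ev in HE.
  assert (Hdeg : forall a, (a < n)%nat -> degree n A a = INR (dn n A a)).
  { intros a Ha. apply degree_eq. intros b Hb; apply hA01; auto. }
  assert (Hdn1 : forall r, (r < n)%nat -> (1 <= dn n A r)%nat).
  { intros r Hr. destruct (hrow r Hr) as [b [Hb Hab]]. unfold dn. apply (ncount_pos n _ b Hb).
    destruct (Req_dec_T (A r b) 0); [contradiction|auto]. }
  assert (Hchar : forall a a', (a < n)%nat -> (a' < n)%nat ->
     (Ev a a' = true <-> glb_rel gamma parts a a' /\ degree n A a = degree n A a')).
  { intros a a' Ha Ha'. unfold Ev, Eb. rewrite Bool.andb_true_iff, glb_relb_spec, Nat.eqb_eq, (Hdeg a Ha), (Hdeg a' Ha').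
    split; intros [H1 H2]; split; auto; try (rewrite H2; auto; fail); apply INR_eq; auto. }
  assert (HW : forall w, inW n gamma A parts w <->
     (forall a a', (a < n)%nat -> (a' < n)%nat -> Ev a a' = true -> w a = w a')).
  { intros w. split.
    - intros Hw a a' Ha Ha' E1. apply (proj1 (Hchar a a' Ha Ha')) in E1. destruct E1. apply Hw; auto.
    - intros Hw a a' Ha Ha' G1 D1. apply Hw; auto. apply Hchar; auto. }
  assert (Key : forall p, inW n gamma A parts (avg Ev n p) /\ dual_L n gamma A F (avg Ev n p) <= dual_L n gamma A F p).
  { intros p. split.
    - apply HW. intros a a' Ha Ha' E1. apply avg_inv; auto.
    - apply avg_L; auto.
      + intros t a a' b Ht Ha Ha' Hb E1. apply (proj1 (Hchar a a' Ha Ha')) in E1. destruct E1 as [G1 _].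
        apply (hFblock t Ht); auto.
      + intros a a' Ha Ha' E1. apply (proj1 (Hchar a a' Ha Ha')) in E1. tauto. }
  split; [|split].
  - exists (ncount n (leader Ev) + gamma)%nat. split.
    + apply basis_gen; auto.
    + pose proof (K_bound n A gamma parts Hdn1) as KB. fold Ev in KB.
      rewrite <- nnz_eq, <- hm, <- glb_card_eq in KB.
      apply le_INR in KB. rewrite !mult_INR in KB.
      rewrite plus_INR. apply Rplus_le_compat_r.
      rewrite <- (sqrt_square (INR (ncount n (leader Ev)))) by apply pos_INR.
      apply sqrt_le_1_alt. replace (2 * INR (glb_card n gamma parts) * INR m) with
        (INR (glb_card n gamma parts) * (INR 2 * INR m)) by (simpl; ring). exact KB.
  - intros r. split.
    + intros H p. destruct (Key p) as [W1 W2]. specialize (H _ W1). lra.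
    + intros H p _. auto.
  - intros p Hp Hmin q. destruct (Key q) as [W1 W2]. specialize (Hmin _ W1). lra.
Qed.
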